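(* Let $E$ be an IL FS encoder with $s$ states whose Kraft matrix $K$ is irreducible, and let $L_{\max}=\max_{z\in\mathcal{Z},x\in\mathcal{X}}L[f(z,x)]$. Then for all $z,z'\in\mathcal{Z}$ and every positive integer $n$, $$(K^n)_{zz'}=\sum_{\{x^n\in\mathcal{X}^n:\ g(z,x^n)=z'\}}2^{-L[f(z,x^n)]}\le 2^{(s-1)L_{\max}}.$$ Consequently, for every $z\in\mathcal{Z}$ and every $n$, $$\sum_{x^n\in\mathcal{X}^n}2^{-L[f(z,x^n)]}\le s\cdot 2^{(s-1)L_{\max}},\qquad \sum_{z\in\mathcal{Z}}\sum_{x^n\in\mathcal{X}^n}2^{-L[f(z,x^n)]}\le s^2\cdot 2^{(s-1)L_{\max}}.$$
   Context: A finite-state (FS) encoder is a quintuple $E=(\mathcal{X},\mathcal{Y},\mathcal{Z},f,g)$, where $\mathcal{X}$ is a finite source alphabet of size $\alpha$, $\mathcal{Y}$ is a finite set of binary strings (possibly containing the empty string, of length $0$), $\mathcal{Z}$ is a finite set of $s$ states, $f:\mathcal{Z}\times\mathcal{X}\to\mathcal{Y}$ is the output function and $g:\mathcal{Z}\times\mathcal{X}\to\mathcal{Z}$ is the next-state function. For $z\in\mathcal{Z}$ and $x^n=(x_1,\dots,x_n)\in\mathcal{X}^n$, set $z_1=z$, $z_{i+1}=g(z_i,x_i)$; write $g(z,x^n)=z_{n+1}$ and let $f(z,x^n)$ denote the binary string obtained by concatenating $f(z_1,x_1),\dots,f(z_n,x_n)$; its length is $L[f(z,x^n)]=\sum_{i=1}^n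 L[f(z_i,x_i)]$, where $L(\cdot)$ denotes the length of a binary string. The encoder is information lossless (IL) if for every $z\in\mathcal{Z}$ and every $n\ge1$, the map $x^n\mapsto (f(z,x^n),g(z,x^n))$ is injective on $\mathcal{X}^n$. The Kraft matrix of $E$ is the $s\times s$ nonnegative matrix $K$ with entries $K_{zz'}=\sum_{\{x\in\mathcal{X}:\ g(z,x)=z'\}}2^{-L[f(z,x)]}$ (an empty sum is $0$). *)

(* Defs.v *)
From HB Require Import structures.
From mathcomp Require Import all_boot all_order all_algebra.
Set Implicit Arguments. Unset Strict Implicit. Unset Printing Implicit Defensive.
Import Order.TTheory GRing.Theory Num.Theory.
Local Open Scope ring_scope.

Section FSEncoder.
Variables (X Z : finType) (f : Z -> X -> seq bool) (g : Z -> X -> Z).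

Fixpoint fs_next (z : Z) (xs : seq X) : Z :=
  if xs is x :: xs' then fs_next (g z x) xs' else z.

Fixpoint fs_out (z : Z) (xs : seq X) : seq bool :=
  if xs is x :: xs' then f z x ++ fs_out (g z x) xs' else [::].

Definition info_lossless : Prop :=
  forall (z : Z) (n : nat), (0 < n)%N ->
    injective (fun t : n.-tuple X => (fs_out z t, fs_next z t)).

Definition Lmax : nat := \max_(z : Z) \max_(x : X) size (f z x).

Variable R : realFieldType.

Definition kraft_matrix : 'M[R]_#|Z| :=
  \matrix_(i, j) \sum_(x : X | g (enum_val i) x == enum_val j)
                    (2%:R : R) ^- size (f (enum_val i) x).

End FSEncoder.

(* matrix power, valid for any square size *)
Definition mxpow (R : pzRingType) (m : nat) (A : 'M[R]_m) (k : nat) : 'M[R]_m :=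
  iter k (fun B => A *m B) 1%:M.

Definition irreducible_mx (R : numDomainType) (m : nat) (A : 'M[R]_m) : Prop :=
  (forall i j, 0 <= A i j) /\ forall i j, exists k : nat, 0 < mxpow A k i j.

(* Main.v *)
Require Import Defs.
From HB Require Import structures.
From mathcomp Require Import all_boot all_order all_algebra.
From mathcomp Require Import ring lra zify.
Set Implicit Arguments. Unset Strict Implicit. Unset Printing Implicit Defensive.
Import Order.TTheory GRing.Theory Num.Theory.
Local Open Scope ring_scope.

Section Aux.
Variable (R : realFieldType) (X : finType).

Lemma big_tuple0 (F : 0.-tuple X -> R) : \sum_(t : 0.-tuple X) F t = F [tuple].
Proof. by rewrite (big_pred1 [tuple]) // => t; apply/esym/eqP; apply: tuple0. Qed.

Lemma big_tupleS n (F : n.+1.-tuple X -> R) :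
  \sum_(t : n.+1.-tuple X) F t = \sum_(x : X) \sum_(t : n.-tuple X) F (cons_tuple x t).
Proof.
rewrite pair_big /=.
rewrite (reindex (fun p : X * n.-tuple X => cons_tuple p.1 p.2)) //=.
exists (fun t : n.+1.-tuple X => (thead t, behead_tuple t)).
  move=> [x t] _ /=; congr pair.
  exact: val_inj.
by move=> t _; rewrite [in RHS](tuple_eta t); apply: val_inj.
Qed.

End Aux.
Section Main.
Variables (R : realFieldType) (X Z : finType) (f : Z -> X -> seq bool) (g : Z -> X -> Z).

Definition W (z : Z) (t : seq X) : R := (2%:R : R) ^- size (fs_out f g z t).
Definition P n (z z' : Z) : R := \sum_(t : n.-tuple X | fs_next g z t == z') W z t.
Definition Q n (z z' : Z) : R :=
  mxpow (kraft_matrix f g R) n (enum_rank z) (enum_rank z').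

Lemma W_cons z x t : W z (x :: t) = (2%:R : R) ^- size (f z x) * W (g z x) t.
Proof. by rewrite /W /= size_cat exprD invfM. Qed.

Lemma P0 z z' : P 0 z z' = (z == z')%:R.
Proof. by rewrite /P big_mkcond /= big_tuple0 /= /W /= expr0 invr1; case: eqP. Qed.

Lemma PS n z z' : P n.+1 z z' = \sum_(x : X) (2%:R : R) ^- size (f z x) * P n (g z x) z'.
Proof.
rewrite /P big_mkcond /= big_tupleS; apply: eq_bigr => x _.
rewrite [in RHS]big_mkcond mulr_sumr; apply: eq_bigr => t _ /=.
by rewrite W_cons; case: ifP; rewrite ?mulr0.
Qed.

Lemma QP n z z' : Q n z z' = P n z z'.
Proof.
elim: n z => [|n IH] z.
  by rewrite /Q /mxpow /= mxE P0 (inj_eq enum_rank_inj).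
rewrite /Q /mxpow /= mxE PS.
rewrite (reindex (@enum_rank Z)) /=; last exact: onW_bij (@enum_rank_bij Z).
rewrite (partition_big (g z) predT) //=.
apply: eq_bigr => w _.
rewrite /kraft_matrix mxE !enum_rankK mulr_suml.
have -> : iter n (fun B => kraft_matrix f g R *m B) 1%:M (enum_rank w) (enum_rank z') = P n w z'
  by rewrite -IH.
by apply: eq_bigr => x /eqP ->.
Qed.

Lemma W_ge0 z t : 0 <= W z t.
Proof. by rewrite /W invr_ge0 exprn_ge0 ?ler0n. Qed.

Lemma P_ge0 n z z' : 0 <= P n z z'.
Proof. by apply: sumr_ge0 => t _; apply: W_ge0. Qed.

Lemma mxpow_add (m : nat) (A : 'M[R]_m) a b : mxpow A (a + b) = mxpow A a *m mxpow A b.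
Proof.
elim: a => [|a IH]; first by rewrite /mxpow /= mul1mx.
by rewrite addSn /mxpow /= -/(mxpow A (a + b)) IH mulmxA.
Qed.

Lemma P_mul n m u v w : P n u v * P m v w <= P (n + m) u w.
Proof.
rewrite -!QP /Q mxpow_add mxE.
rewrite (reindex (@enum_rank Z)) /=; last exact: onW_bij (@enum_rank_bij Z).
rewrite (bigD1 v) //= lerDl; apply: sumr_ge0 => y _.
by rewrite -/(Q n u y) -/(Q m y w) !QP mulr_ge0 ?P_ge0.
Qed.

Lemma size_out z (t : seq X) : (size (fs_out f g z t) <= size t * Lmax f)%N.
Proof.
elim: t z => [|x t IH] z //=.
rewrite size_cat mulSn leq_add //.
rewrite /Lmax.
have H1 := @leq_bigmax _ (fun x => size (f z x)) x.
exact: (leq_trans H1 (@leq_bigmax _ (fun z0 => \max_(x0 : X) size (f z0 x0))%N z)).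
Qed.

Lemma W_lb z t : (2%:R : R) ^- (size t * Lmax f) <= W z t.
Proof.
rewrite /W lef_pV2 ?qualifE /= ?exprn_gt0 ?ltr0n //.
by rewrite ler_eXn2l ?ltr1n // size_out.
Qed.

Lemma P_lb z (xs : seq X) : W z xs <= P (size xs) z (fs_next g z xs).
Proof.
rewrite /P (bigD1 (in_tuple xs)) //= lerDl.
by apply: sumr_ge0 => t _; apply: W_ge0.
Qed.

Lemma card_inj_bits (T : finType) (A : {pred T}) (h : T -> seq bool) l :
  {in A &, injective h} -> (forall t, t \in A -> size (h t) = l) -> (#|A| <= 2 ^ l)%N.
Proof.
move=> Hinj Hs.
pose h' t : l.-tuple bool := insubd (nseq_tuple l false) (h t).
have inj : {in A &, injective h'}.
  move=> a b Ha Hb /(congr1 val); rewrite !val_insubd !Hs ?eqxx // => /Hinj; exact.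
rewrite -(card_in_imset inj); apply: leq_trans (max_card _) _.
by rewrite card_tuple card_bool.
Qed.

Lemma sum_const_pred (T : finType) (Pr : pred T) (c : R) :
  \sum_(i | Pr i) c = c *+ #|Pr|.
Proof. exact: sumr_const. Qed.

Lemma count_bound M z : info_lossless f g -> P M z z <= (M * Lmax f)%:R + 1.
Proof.
move=> IL; set D := (M * Lmax f)%N.
rewrite /P (partition_big (fun t : M.-tuple X => (inord (size (fs_out f g z t)) : 'I_D.+1)) predT) //=.
rewrite natr1 -[X in _ <= X]mulr1 -[in X in _ <= X](card_ord D.+1) mulr_natl -sumr_const.
apply: ler_sum => l _.
rewrite (eq_bigr (fun _ => (2%:R : R) ^- l)); last first.
  move=> t /andP [_ /eqP <-]; rewrite /W inordK //.
  by rewrite ltnS (leq_trans (size_out _ _)) // size_tuple.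
rewrite sum_const_pred -(mulr_natr ((2%:R : R) ^- l)).
have Hc : (#|[pred t : M.-tuple X | (fs_next g z t == z) &&
                 ((inord (size (fs_out f g z t)) : 'I_D.+1) == l)]| <= 2 ^ l)%N.
  apply: (card_inj_bits (h := fun t : M.-tuple X => fs_out f g z t)).
    move=> a b; rewrite !inE => /andP [/eqP Ha _] /andP [/eqP Hb _] E.
    case: (posnP M) => [M0|Mpos].
      apply: eq_from_tnth => -[i Hi]; exfalso.
      have H0 : (i < 0)%N by move: Hi; rewrite M0.
      by rewrite ltn0 in H0.
    apply: (IL z M Mpos) => /=; by rewrite E Ha Hb.
  move=> t; rewrite inE => /andP [_ /eqP <-]; rewrite inordK //.
  by rewrite ltnS (leq_trans (size_out _ _)) // size_tuple.
apply: (@le_trans _ _ ((2%:R : R) ^- l * (2 ^ l)%:R)).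
  apply: ler_wpM2l; [by rewrite invr_ge0 exprn_ge0 ?ler0n | by rewrite ler_nat].
by rewrite natrX mulVf // expf_neq0 // pnatr_eq0.
Qed.
Lemma bern (e : R) (k : nat) : 0 <= e ->
  2 + 2 * k%:R * e + k%:R * (k%:R - 1) * e ^+ 2 <= 2 * (1 + e) ^+ k.
Proof.
move=> e0; elim: k => [|k IH]; first by rewrite expr0 mulr1; lra.
have hk : 0 <= k%:R * (k%:R - 1) :> R.
  case: k {IH} => [|k]; first by rewrite mul0r.
  rewrite -natr1 addrK; have := ler0n R k; nra.
have k0 : 0 <= k%:R :> R by rewrite ler0n.
rewrite [(1 + e) ^+ k.+1]exprS -[k.+1%:R]natr1.
set A := (1 + e) ^+ k in IH *.
have A0 : 0 <= A by rewrite exprn_ge0 // addr_ge0.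
have h1 : 0 <= k%:R * (k%:R - 1) * e ^+ 3 by rewrite mulr_ge0 // exprn_ge0.
have h2 := ler_wpM2r (addr_ge0 ler01 e0) IH.
rewrite expr2 in h2 *; rewrite exprS expr2 in h1.
nra.
Qed.

Lemma P_int N z z' : exists c : nat, P N z z' * (2 ^ (N * Lmax f))%:R = c%:R.
Proof.
exists (\sum_(t : N.-tuple X | fs_next g z t == z') 2 ^ (N * Lmax f - size (fs_out f g z t)))%N.
rewrite /P mulr_suml natr_sum; apply: eq_bigr => t _.
have Hs : (size (fs_out f g z t) <= N * Lmax f)%N.
  by rewrite (leq_trans (size_out _ _)) // size_tuple.
rewrite /W !natrX -{1}(subnK Hs) exprD mulrC -mulrA mulfV ?mulr1 //.
by rewrite expf_neq0 // pnatr_eq0.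
Qed.

Lemma P_pow N z k : P N z z ^+ k <= P (k * N) z z.
Proof.
elim: k => [|k IH]; first by rewrite expr0 mul0n P0 eqxx.
rewrite exprS mulSn.
apply: le_trans (P_mul _ _ _ _ _).
by apply: ler_wpM2l; [exact: P_ge0 | exact: IH].
Qed.

Lemma P_le1 N z : info_lossless f g -> P N z z <= 1.
Proof.
move=> IL; set D := (N * Lmax f)%N; set a := P N z z.
have [c Hc] := P_int N z z.
rewrite -/D -/a in Hc.
set E : R := (2 ^ D)%:R in Hc.
have E0 : 0 < E by rewrite ltr0n expn_gt0.
rewrite leNgt; apply/negP => Ha.
have hc : (2 ^ D < c)%N by rewrite -(ltr_nat R) -Hc -/E ltr_pMl.
have hE : E + 1 <= a * E by rewrite Hc /E natr1 ler_nat.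
set e := E^-1.
have e0 : 0 < e by rewrite invr_gt0.
have h1e : 1 + e <= a.
  by rewrite -(ler_pM2r E0) mulrDl mul1r mulVf ?gt_eqF.
set k := (2 * D * (2 ^ D) ^ 2).+1.
have Hpow := P_pow N z k.
have Hcnt := count_bound (k * N) z IL.
have Hb := bern k (ltW e0).
have Hmono : (1 + e) ^+ k <= a ^+ k.
  by apply: lerXn2r => //; rewrite qualifE /= ?addr_ge0 ?ltW //; lra.
have HkN : ((k * N * Lmax f)%N%:R : R) = k%:R * D%:R by rewrite -mulnA natrM.
have Hkm1 : (k%:R : R) - 1 = 2 * D%:R * E ^+ 2.
  by rewrite /k -natr1 addrK /E !natrM natrX.
have Hk2 : (k%:R : R) * (k%:R - 1) * e ^+ 2 = 2 * k%:R * D%:R.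
  by rewrite Hkm1 /e; field; rewrite gt_eqF.
have kpos : 0 < (k%:R : R) by rewrite ltr0n.
have ke : 0 < (k%:R : R) * e by rewrite mulr_gt0.
rewrite HkN in Hcnt.
nra.
Qed.

Fixpoint traj (u : Z) (xs : seq X) : seq Z :=
  if xs is x :: xs' then g u x :: traj (g u x) xs' else [::].

Definition erel : rel Z := fun u v => [exists x, g u x == v].

Lemma traj_path u xs : path erel u (traj u xs) /\ last u (traj u xs) = fs_next g u xs.
Proof.
elim: xs u => [|x xs IH] u //=.
have [H1 H2] := IH (g u x); split => //.
by rewrite H1 andbT; apply/existsP; exists x.
Qed.

Lemma path_word u p : path erel u p ->
  exists xs : seq X, size xs = size p /\ fs_next g u xs = last u p.
Proof.
elim: p u => [|v p IH] u /=; first by exists [::].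
move=> /andP [/existsP [x /eqP Hx] Hp].
have [xs [H1 H2]] := IH v Hp.
by exists (x :: xs); rewrite /= H1 Hx H2.
Qed.

Lemma reach z' z : irreducible_mx (kraft_matrix f g R) ->
  exists xs : seq X, (size xs <= #|Z| - 1)%N /\ fs_next g z' xs = z.
Proof.
move=> [_ Hirr].
have [k Hk] := Hirr (enum_rank z') (enum_rank z).
rewrite -/(Q k z' z) QP /P in Hk.
have [t Ht] : exists t : k.-tuple X, fs_next g z' t == z.
  case: (pickP (fun t : k.-tuple X => fs_next g z' t == z)) => [t Ht | H0].
    by exists t.
  by rewrite big_pred0 // ltxx in Hk.
have [Hp Hl] := traj_path z' t.
move: Hl; case: (shortenP Hp) => p' Hp' Hu _ Hl.
have [xs [Hs Hn]] := path_word Hp'.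
exists xs; split; last by rewrite Hn -(eqP Ht) -Hl.
rewrite Hs.
have := max_card [pred y | y \in z' :: p'].
have -> : #|[pred y | y \in z' :: p']| = #|z' :: p'| by apply: eq_card.
by rewrite (card_uniqP Hu) /= => H; lia.
Qed.

Lemma P_bound n z z' : info_lossless f g -> irreducible_mx (kraft_matrix f g R) ->
  P n z z' <= (2%:R : R) ^+ ((#|Z| - 1) * Lmax f).
Proof.
move=> IL Hirr.
have [xs [Hs Hn]] := reach z' z Hirr.
have H1 := P_mul n (size xs) z z' z.
have H2 := P_le1 (n + size xs) z IL.
have H3 : (2%:R : R) ^- (size xs * Lmax f) <= P (size xs) z' z.
  by rewrite -Hn; apply: le_trans (W_lb z' xs) (P_lb z' xs).
have E0 : 0 < (2%:R : R) ^+ (size xs * Lmax f) by rewrite exprn_gt0 ?ltr0n.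
have H4 : P n z z' <= (2%:R : R) ^+ (size xs * Lmax f).
  rewrite -[X in _ <= X]mul1r -ler_pdivrMr //.
  apply: le_trans (_ : P n z z' * P (size xs) z' z <= 1); last exact: le_trans H1 H2.
  by apply: ler_wpM2l; [exact: P_ge0 | exact: H3].
apply: le_trans H4 _.
by rewrite ler_eXn2l ?ltr1n // leq_mul2r Hs orbT.
Qed.

Lemma sum_all n z :
  \sum_(t : n.-tuple X) W z t = \sum_(z' : Z) P n z z'.
Proof. by rewrite (partition_big (fun t : n.-tuple X => fs_next g z t) predT). Qed.
End Main.

Unset Implicit Arguments.

Theorem theorem2 (R : realFieldType) (X Z : finType)
  (f : Z -> X -> seq bool) (g : Z -> X -> Z) :
  info_lossless f g ->
  irreducible_mx (kraft_matrix f g R) ->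
  (forall (z z' : Z) (n : nat), (0 < n)%N ->
     mxpow (kraft_matrix f g R) n (enum_rank z) (enum_rank z')
       = \sum_(t : n.-tuple X | fs_next g z t == z')
            (2%:R : R) ^- size (fs_out f g z t)
     /\ \sum_(t : n.-tuple X | fs_next g z t == z')
            (2%:R : R) ^- size (fs_out f g z t)
        <= (2%:R : R) ^+ ((#|Z| - 1) * Lmax f)) /\
  (forall (z : Z) (n : nat), (0 < n)%N ->
     \sum_(t : n.-tuple X) (2%:R : R) ^- size (fs_out f g z t)
       <= #|Z|%:R * (2%:R : R) ^+ ((#|Z| - 1) * Lmax f)) /\
  (forall n : nat, (0 < n)%N ->
     \sum_(z : Z) \sum_(t : n.-tuple X) (2%:R : R) ^- size (fs_out f g z t)
       <= (#|Z| ^ 2)%:R * (2%:R : R) ^+ ((#|Z| - 1) * Lmax f)).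
Proof.
move=> IL Hirr.
set B := (2%:R : R) ^+ ((#|Z| - 1) * Lmax f).
have PB : forall n z z', P R f g n z z' <= B := fun n z z' => P_bound n z z' IL Hirr.
have Hsum : forall n z, \sum_(t : n.-tuple X) (2%:R : R) ^- size (fs_out f g z t) <= #|Z|%:R * B.
  move=> n z; have := sum_all R f g n z; rewrite /W => ->.
  apply: le_trans (ler_sum _ (fun z' _ => PB n z z')) _.
  by rewrite sumr_const mulr_natl.
split.
  move=> z z' n _; split; first exact: QP.
  exact: PB.
split; first by move=> z n _; exact: Hsum.
move=> n _; apply: le_trans (ler_sum _ (fun z _ => Hsum n z)) _.
by rewrite sumr_const -[_ *+ _]mulr_natl -mulnn natrM mulrA.
Qed.
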